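(* Let $G$ be a group and let $\mathrm{A}(G)$ be the kernel of $\epsilon\colon\mathrm{Gr}(\mathrm{Pq}(G))\to G$. Then there is an exact sequence of abelian groups \[ \mathrm{H}_2(G;\mathbb{Z})\longrightarrow\mathrm{A}(G)\longrightarrow\mathrm{B}(G)\longrightarrow\mathrm{H}_1(G;\mathbb{Z})\longrightarrow 0, \] where $\mathrm{B}(G)$ is the quotient of the free abelian group $\mathbb{Z}\mathrm{Cl}(G)$ on the set $\mathrm{Cl}(G)$ of conjugacy classes of elements of $G$ by the relations $n[a]=[a^n]$ for all $a\in G$ and all $n\in\mathbb{Z}$.
   Context: For a group $G$, $\mathrm{Pq}(G)$ is the power quandle on the underlying set of $G$ with $a\rhd b=aba^{-1}$, $\pi^n(a)=a^n$ ($n\in\mathbb{Z}$), and unit the identity $e$. $\mathrm{Gr}(\mathrm{Pq}(G))$ is the group with generators $\sigma(a)$, $a\in G$, and relations $\sigma(aba^{-1})=\sigma(a)\sigma(b)\sigma(a)^{-1}$, $\sigma(a^n)=\sigma(a)^n$, $\sigma(e)=1$ for all $a,b\in G$, $n\in\mathbb{Z}$. $\epsilon\colon\mathrm{Gr}(\mathrm{Pq}(G))\to G$ is the surjective homomorphism with $\epsilon(\sigma(a))=a$; its kernel is abelian (indeed central). $[a]$ denotes the conjugacy class of $a$. $\mathrm{H}_i(G;\mathbb{Z})$ is integral group homology. *)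

(* Defs.v *)
From HB Require Import structures.
From mathcomp Require Import all_boot all_algebra.
From mathcomp Require Import freeg.
Set Implicit Arguments. Unset Strict Implicit. Unset Printing Implicit Defensive.
Import GRing.Theory.
Local Open Scope ring_scope.

(* Abelian groups presented as "subquotients": a carrier type, a       *)
(* membership predicate (the subgroup), an equivalence (equality in    *)
(* the quotient), the group operation and the unit.                    *)
Record sgroup := SGroup {
  sg_car : Type;
  sg_mem : sg_car -> Prop;
  sg_eqv : sg_car -> sg_car -> Prop;
  sg_op  : sg_car -> sg_car -> sg_car;
  sg_one : sg_car }.
Arguments sg_mem : clear implicits.
Arguments sg_eqv : clear implicits.
Arguments sg_op : clear implicits.
Arguments sg_one : clear implicits.

Definition sg_hom (X Y : sgroup) (f : sg_car X -> sg_car Y) : Prop :=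
  [/\ (forall x, sg_mem X x -> sg_mem Y (f x)),
      (forall x y, sg_mem X x -> sg_mem X y -> sg_eqv X x y ->
                   sg_eqv Y (f x) (f y)) &
      (forall x y, sg_mem X x -> sg_mem X y ->
                   sg_eqv Y (f (sg_op X x y)) (sg_op Y (f x) (f y)))].

Definition sg_exact (X Y Z : sgroup) (f : sg_car X -> sg_car Y)
    (g : sg_car Y -> sg_car Z) : Prop :=
  forall y, sg_mem Y y ->
    (sg_eqv Z (g y) (sg_one Z) <-> exists2 x, sg_mem X x & sg_eqv Y (f x) y).

Definition sg_onto (X Y : sgroup) (f : sg_car X -> sg_car Y) : Prop :=
  forall y, sg_mem Y y -> exists2 x, sg_mem X x & sg_eqv Y (f x) y.

Section PowerQuandle.
Variable G : groupType.

Definition zpowg (a : G) (n : int) : G :=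
  match n with Posz k => (a ^+ k)%g | Negz k => ((a ^+ k.+1)^-1)%g end.

(* Gr(Pq(G)): words in the letters sigma(a)^{+-1}; (false,a) = sigma(a),
   (true,a) = sigma(a)^-1, modulo the congruence generated by free
   reduction and the defining relations. *)
Definition word := seq (bool * G).

Definition wpow (a : G) (n : int) : word :=
  match n with Posz k => nseq k (false, a) | Negz k => nseq k.+1 (true, a) end.

Inductive grel : word -> word -> Prop :=
| grel_refl w : grel w w
| grel_sym u v : grel u v -> grel v u
| grel_trans u v w : grel u v -> grel v w -> grel u w
| grel_cat u u' v v' : grel u u' -> grel v v' -> grel (u ++ v) (u' ++ v')
| grel_free (b : bool) (a : G) : grel [:: (b, a); (~~ b, a)] [::]
| grel_conj (a b : G) :
    grel [:: (false, (a * b * a^-1)%g)] [:: (false, a); (false, b); (true, a)]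
| grel_pow (a : G) (n : int) : grel [:: (false, zpowg a n)] (wpow a n)
| grel_unit : grel [:: (false, 1%g)] [::].

Definition weps (w : word) : G :=
  foldr (fun p acc => ((if p.1 then p.2^-1 else p.2) * acc)%g) 1%g w.

Definition AG : sgroup :=
  @SGroup word (fun w => weps w = 1%g) grel cat [::].

Definition C1 := {freeg G / int}.
Definition C2 := {freeg (G * G) / int}.
Definition C3 := {freeg (G * G * G) / int}.

Definition gen1 (a : G) : C1 := << a >>.
Definition gen2 (a b : G) : C2 := << (a, b) >>.

Definition d2 : C2 -> C1 :=
  fglift (fun p : G * G => gen1 p.2 - gen1 (p.1 * p.2)%g + gen1 p.1).
Definition d3 : C3 -> C2 :=
  fglift (fun t : G * G * G =>
    gen2 t.1.2 t.2 - gen2 (t.1.1 * t.1.2)%g t.2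
    + gen2 t.1.1 (t.1.2 * t.2)%g - gen2 t.1.1 t.1.2).

Definition H2 : sgroup :=
  @SGroup C2 (fun x => d2 x = 0) (fun x y => exists z, d3 z = x - y) +%R 0.

(* H_1(G;Z) = C1 / im d2  (d1 = 0) *)
Definition H1 : sgroup :=
  @SGroup C1 (fun _ => True) (fun x y => exists z, d2 z = x - y) +%R 0.

(* B(G) = Z Cl(G) / < n[a] - [a^n] >, where Z Cl(G) = Z[G] / < [a] - [bab^-1] > *)
Inductive Bnull : C1 -> Prop :=
| Bnull0 : Bnull 0
| Bnull_conj (a b : G) : Bnull (gen1 (b * a * b^-1)%g - gen1 a)
| Bnull_pow (a : G) (n : int) : Bnull (n *: gen1 a - gen1 (zpowg a n))
| Bnull_add x y : Bnull x -> Bnull y -> Bnull (x + y)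
| Bnull_opp x : Bnull x -> Bnull (- x).

Definition BG : sgroup :=
  @SGroup C1 (fun _ => True) (fun x y => Bnull (x - y)) +%R 0.

End PowerQuandle.

(* Main.v *)
Require Import Defs.
From HB Require Import structures.
From mathcomp Require Import all_boot all_algebra.
From mathcomp Require Import freeg zify.
From Stdlib Require Import Setoid Morphisms.
Set Implicit Arguments. Unset Strict Implicit. Unset Printing Implicit Defensive.
Import GRing.Theory.
Local Open Scope ring_scope.

Section S.
Variable G : groupType.
Local Notation gr := (@Defs.grel G).
Local Notation word := (word G).
#[local] Instance grel_eq : Equivalence gr.
Proof. split; [exact: grel_refl|exact: grel_sym|exact: grel_trans]. Qed.
#[local] Instance cat_prop : Proper (gr ==> gr ==> gr) (@cat (bool*G)).
Proof. by move=> ? ? ? ? ? ?; apply: grel_cat. Qed.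
#[local] Instance cons_prop : Proper (eq ==> gr ==> gr) (@cons (bool*G)).
Proof. move=> x _ <- u v h; exact: (grel_cat (grel_refl [:: x]) h). Qed.

#[local] Hint Resolve grel_refl : core.
Lemma canc (b : bool) (a : G) (w : word) : gr [:: (b,a), (~~b,a) & w] w.
Proof. exact: (grel_cat (grel_free b a) (grel_refl w)). Qed.
Lemma canc_ft (a : G) (w : word) : gr [:: (false,a), (true,a) & w] w.
Proof. exact: (canc false). Qed.
Lemma canc_tf (a : G) (w : word) : gr [:: (true,a), (false,a) & w] w.
Proof. exact: (canc true). Qed.

Definition winv (w : word) : word := rev (map (fun p => (~~ p.1, p.2)) w).
Lemma winv_cons x w : winv (x :: w) = winv w ++ [:: (~~ x.1, x.2)].
Proof. by rewrite /winv /= rev_cons cats1. Qed.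
Lemma winv_cat u v : winv (u ++ v) = winv v ++ winv u.
Proof. by rewrite /winv map_cat rev_cat. Qed.
Lemma winvK w : winv (winv w) = w.
Proof. rewrite /winv map_rev revK -map_comp map_id_in //. by case=> [[] ?]. Qed.
Lemma wcancR w : gr (w ++ winv w) [::].
Proof.
elim: w => [|x w IH]; first reflexivity. rewrite winv_cons -cat1s -!catA (catA w) IH /=.
case: x => b a; exact: canc.
Qed.
Lemma wcancL w : gr (winv w ++ w) [::].
Proof. by have := wcancR (winv w); rewrite winvK. Qed.

Lemma weps_cat (u v : word) : weps (u ++ v) = (weps u * weps v)%g.
Proof. elim: u => [|x u IH] /=; first by rewrite mul1g. by rewrite IH mulgA. Qed.

Lemma conjc (a b : G) w :
  gr ((false, (a * b * a^-1)%g) :: w) [:: (false,a), (false,b), (true,a) & w].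
Proof. exact: (grel_cat (grel_conj a b) (grel_refl w)). Qed.

Lemma conj_letter (u : word) (a : G) :
  gr (u ++ [:: (false,a)]) ((false, weps u * a * (weps u)^-1)%g :: u).
Proof.
elim: u a => [|[b c] u IH] a /=.
  by rewrite mul1g invg1 mulg1.
rewrite IH. case: b => /=.
- set x := (weps u * a * (weps u)^-1)%g.
  have e : x = (c * (c^-1 * x * c) * c^-1)%g.
    by rewrite !mulgA mulgV mul1g mulgK.
  rewrite [in X in gr X _]e conjc canc_tf.
  have -> : (c^-1 * weps u * a * (c^-1 * weps u)^-1)%g = (c^-1 * x * c)%g.
    by rewrite /x invgM invgK !mulgA.
  by [].
- set x := (weps u * a * (weps u)^-1)%g.
  have -> : (c * weps u * a * (c * weps u)^-1)%g = (c * x * c^-1)%g.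
    by rewrite /x invgM !mulgA.
  by rewrite [in X in gr _ X]conjc canc_tf.
Qed.

Lemma central_letter (w : word) x : weps w = 1%g -> gr (w ++ [:: x]) (x :: w).
Proof.
move=> hw; case: x => [[] a].
- have h1 := conj_letter w a; rewrite hw mul1g invg1 mulg1 in h1.
  transitivity (((true,a)::w ++ [:: (false,a)]) ++ [:: (true,a)]).
    by rewrite h1 /= canc_tf.
  by rewrite /= -catA /= canc_ft cats0.
- by have := conj_letter w a; rewrite hw mul1g invg1 mulg1.
Qed.

Lemma central (w u : word) : weps w = 1%g -> gr (w ++ u) (u ++ w).
Proof.
move=> hw; elim: u => [|x u IH]; first by rewrite cats0.
by rewrite -cat1s catA central_letter //= IH.
Qed.

Definition wzpow (w : word) (n : int) : word :=
  match n with Posz k => flatten (nseq k w) | Negz k => flatten (nseq k.+1 (winv w)) end.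

Lemma weps_flatten_nseq (w : word) k : weps w = 1%g -> weps (flatten (nseq k w)) = 1%g.
Proof. move=> h; elim: k => //= k IH. by rewrite weps_cat h IH mul1g. Qed.

Lemma weps_winv (w : word) : weps (winv w) = (weps w)^-1%g.
Proof.
elim: w => [|[b a] w IH] /=; first by rewrite invg1.
rewrite winv_cons weps_cat IH invgM /=; case: b => /=; by rewrite ?invgK mulg1.
Qed.

Lemma weps_wzpow (w : word) n : weps w = 1%g -> weps (wzpow w n) = 1%g.
Proof.
move=> h; case: n => k; rewrite /wzpow; apply: weps_flatten_nseq => //.
by rewrite weps_winv h invg1.
Qed.

Lemma flatten_nseqS (w : word) k : flatten (nseq k.+1 w) = flatten (nseq k w) ++ w.
Proof. elim: k => [|k IH]; first by rewrite /= cats0. move: IH; rewrite /flatten /= => IH. by rewrite -catA IH. Qed.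

Lemma wzS (w : word) n : gr (wzpow w (n + 1)) (w ++ wzpow w n).
Proof.
case: n => [k|[|k]].
- by rewrite -PoszD addn1.
- by rewrite /= cats0 wcancR.
- have -> : Negz k.+1 + 1 = Negz k by rewrite !NegzE; lia.
  by rewrite /= catA wcancR.
Qed.

Lemma wzP (w : word) n : gr (wzpow w (n - 1)) (winv w ++ wzpow w n).
Proof.
case: n => [[|k]|k].
- by [].
- have -> : Posz k.+1 - 1 = Posz k by lia.
  by rewrite /= catA wcancL.
- have -> : Negz k - 1 = Negz k.+1 by rewrite !NegzE; lia.
  by [].
Qed.

Lemma wzD (w : word) n m : gr (wzpow w (n + m)) (wzpow w n ++ wzpow w m).
Proof.
elim/int_ind: n => [|n IH|n IH]; first by rewrite add0r.
- have -> : Posz n.+1 + m = (Posz n + m) + 1 by lia.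
  have -> : Posz n.+1 = Posz n + 1 by lia.
  by rewrite !wzS IH catA.
- have -> : - Posz n.+1 + m = (- Posz n + m) - 1 by lia.
  have -> : - Posz n.+1 = - Posz n - 1 by lia.
  by rewrite !wzP IH catA.
Qed.

Lemma wz0 (w : word) : wzpow w 0 = [::]. Proof. by []. Qed.
Lemma wz1 (w : word) : wzpow w 1 = w. Proof. by rewrite /= cats0. Qed.

Definition cw (p : G * G) : word := [:: (false, p.1); (false, p.2); (true, (p.1 * p.2)%g)].
Lemma weps_cw p : weps (cw p) = 1%g.
Proof. by rewrite /= mulg1 invgM !mulgA mulgK mulgV. Qed.

Definition Fw (s : seq (int * (G * G))) : word :=
  flatten [seq wzpow (cw p.2) p.1 | p <- s].

Lemma weps_Fw s : weps (Fw s) = 1%g.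
Proof.
elim: s => [|p s IH] //=. by rewrite weps_cat IH weps_wzpow ?weps_cw ?mulg1.
Qed.

Lemma central_wz (p : G * G) n (u : word) : gr (wzpow (cw p) n ++ u) (u ++ wzpow (cw p) n).
Proof. apply: central; exact/weps_wzpow/weps_cw. Qed.

Lemma insert_lemma (L : seq (G * G)) (k : G * G) (n : int) (q r : G * G -> int) :
  uniq L -> k \in L -> (forall j, q j = (if j == k then n else 0) + r j) ->
  gr (flatten [seq wzpow (cw j) (q j) | j <- L])
     (wzpow (cw k) n ++ flatten [seq wzpow (cw j) (r j) | j <- L]).
Proof.
elim: L => [|j L IH] //= /andP[jL uL]; rewrite in_cons => kL hq.
case: (eqVneq j k) => [ejk|njk].
- subst j. rewrite hq eqxx wzD -catA.
  have -> : [seq wzpow (cw j) (q j) | j <- L] = [seq wzpow (cw j) (r j) | j <- L].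
    apply/eq_in_map => j jL'; rewrite hq; case: eqP => [ej|]; last by rewrite add0r.
    by subst j; rewrite jL' in jL.
  by [].
- rewrite eq_sym (negbTE njk) /= in kL.
  rewrite hq (negbTE njk) add0r IH // catA central_wz -catA.
  by [].
Qed.

Lemma Fw_canon (L : seq (G * G)) s : uniq L -> {subset [seq p.2 | p <- s] <= L} ->
  gr (Fw s) (flatten [seq wzpow (cw j) (precoeff j s) | j <- L]).
Proof.
move=> uL; elim: s => [|[n k] s IH] sub.
  rewrite (_ : [seq _ | j <- L] = [seq [::] | j <- L]); last first.
    by apply: eq_map => j; rewrite precoeff_nil.
  by elim: L {uL sub}.
have sub' : {subset [seq p.2 | p <- s] <= L}.
  by move=> x hx; apply: sub; rewrite /= in_cons hx orbT.
rewrite (@insert_lemma L k n _ (fun j => precoeff j s)) //.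
- rewrite -(IH sub'). by [].
- by apply: sub; rewrite /= in_cons eqxx.
- move=> j; rewrite precoeff_cons eq_sym; case: eqP => _; by rewrite ?mul1r ?mul0r.
Qed.

Lemma Fw_coeff s1 s2 : (forall j, precoeff j s1 = precoeff j s2) -> gr (Fw s1) (Fw s2).
Proof.
move=> h; set L := undup ([seq p.2 | p <- s1] ++ [seq p.2 | p <- s2]).
have uL : uniq L by exact: undup_uniq.
rewrite (@Fw_canon L s1 uL) ?(@Fw_canon L s2 uL).
- by rewrite (eq_map (fun j => congr1 _ (h j))).
- by move=> x hx; rewrite mem_undup mem_cat hx orbT.
- by move=> x hx; rewrite mem_undup mem_cat hx.
Qed.


Definition f1 (x : C2 G) : word := Fw (fgenum x).

Lemma Fw_cat s1 s2 : Fw (s1 ++ s2) = Fw s1 ++ Fw s2.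
Proof. by rewrite /Fw map_cat flatten_cat. Qed.

Lemma f1_Freeg s : gr (f1 [freeg s]) (Fw s).
Proof.
apply: Fw_coeff => j.
by rewrite -[LHS]coeff_Freeg Freeg_enum coeff_Freeg.
Qed.

Lemma weps_f1 x : weps (f1 x) = 1%g.
Proof. exact: weps_Fw. Qed.

Lemma f1D x y : gr (f1 (x + y)) (f1 x ++ f1 y).
Proof.
rewrite -[x in f1 (x + _)]Freeg_enum -[y in f1 (_ + y)]Freeg_enum -freeg_cat.
by rewrite f1_Freeg Fw_cat.
Qed.

Lemma f10 : gr (f1 0) [::].
Proof. by rewrite -freeg_nil f1_Freeg. Qed.

Lemma f1N x : gr (f1 (- x)) (winv (f1 x)).
Proof.
transitivity (winv (f1 x) ++ (f1 x ++ f1 (- x))).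
  by rewrite catA wcancL.
by rewrite -f1D addrN f10 cats0.
Qed.

Lemma f1B x y : gr (f1 (x - y)) (f1 x ++ winv (f1 y)).
Proof. by rewrite f1D f1N. Qed.

Lemma f1U p : gr (f1 (gen2 p.1 p.2)) (cw p).
Proof. rewrite /gen2 f1_Freeg /Fw /= ?cats0. by case: p. Qed.

Lemma winv_nil (w : word) : gr w [::] -> gr (winv w) [::].
Proof. move=> h. transitivity (winv w ++ w); last exact: wcancL. rewrite -{1}[winv w]cats0. apply: grel_cat => //. exact: grel_sym. Qed.

Lemma f1_triv_N x : gr (f1 x) [::] -> gr (f1 (- x)) [::].
Proof. by move=> h; rewrite f1N; apply: winv_nil. Qed.

Lemma f1_triv_D x y : gr (f1 x) [::] -> gr (f1 y) [::] -> gr (f1 (x + y)) [::].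
Proof. by move=> hx hy; rewrite f1D hx hy. Qed.

Lemma f1_triv_Z (n : int) x : gr (f1 x) [::] -> gr (f1 (n *: x)) [::].
Proof.
move=> hx; rewrite -[n]intz scaler_int.
have hp : forall k : nat, gr (f1 (x *+ k)) [::].
  elim=> [|k IH]; first by rewrite mulr0n f10.
  by rewrite mulrS f1_triv_D.
case: n => k; first exact: (hp k).
rewrite NegzE mulrNz; apply: f1_triv_N; exact: (hp k.+1).
Qed.


Local Notation C1 := (C1 G).
Definition ab (w : word) : C1 := \sum_(p <- w) (if p.1 then - gen1 p.2 else gen1 p.2).
Definition d2gen := (fun p : G * G => gen1 p.2 - gen1 (p.1 * p.2)%g + gen1 p.1).

Lemma ab_cat u v : ab (u ++ v) = ab u + ab v.
Proof. by rewrite /ab big_cat. Qed.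
Lemma ab_cons x u : ab (x :: u) = (if x.1 then - gen1 x.2 else gen1 x.2) + ab u.
Proof. by rewrite /ab big_cons. Qed.
Lemma ab_nil : ab [::] = 0.
Proof. by rewrite /ab big_nil. Qed.

Lemma scale_Posz (k : nat) (v : C1) : (Posz k) *: v = v *+ k.
Proof. by rewrite -[Posz k]intz scaler_int. Qed.
Lemma scale_Negz (k : nat) (v : C1) : (Negz k) *: v = - (v *+ k.+1).
Proof. by rewrite NegzE scaleNr scale_Posz. Qed.

Lemma ab_flatten_nseq k (w : word) : ab (flatten (nseq k w)) = ab w *+ k.
Proof. elim: k => [|k IH]; first by rewrite ab_nil. by rewrite /= ab_cat IH mulrS. Qed.

Lemma ab_nseq k (x : bool * G) : ab (nseq k x) = ab [:: x] *+ k.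
Proof. elim: k => [|k IH]; first by rewrite ab_nil. by rewrite /= ab_cons IH mulrS ab_cons ab_nil addr0. Qed.

Lemma ab_winv w : ab (winv w) = - ab w.
Proof.
elim: w => [|x w IH]; first by rewrite ab_nil oppr0.
rewrite winv_cons ab_cat IH ab_cons ab_cons ab_nil addr0 opprD addrC.
by case: x.1 => /=; rewrite ?opprK.
Qed.

Lemma ab_wzpow w n : ab (wzpow w n) = n *: ab w.
Proof.
case: n => k; rewrite /wzpow ab_flatten_nseq ?scale_Posz ?scale_Negz //.
by rewrite ab_winv mulNrn.
Qed.

Lemma ab_wpow (a : G) n : ab (wpow a n) = n *: gen1 a.
Proof.
case: n => k; rewrite /wpow ab_nseq ab_cons ab_nil addr0 ?scale_Posz ?scale_Negz //=.
by rewrite mulNrn.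
Qed.

Lemma ab_cw p : ab (cw p) = d2gen p.
Proof. by rewrite /cw !ab_cons ab_nil /= addr0 /d2gen [RHS]addrC. Qed.

Lemma ab_Fw s : ab (Fw s) = \sum_(x <- s) x.1 *: d2gen x.2.
Proof.
elim: s => [|x s IH]; first by rewrite big_nil ab_nil.
by rewrite big_cons -IH /Fw /= ab_cat ab_wzpow ab_cw.
Qed.

Lemma ab_f1 x : ab (f1 x) = d2 x.
Proof.
rewrite /d2 -[x in RHS]Freeg_enum fglift_Freeg /f1 ab_Fw. by [].
Qed.

Lemma Bnull_eq (x y : C1) : x = y -> Bnull x -> Bnull y. Proof. by move=> ->. Qed.
Lemma Bnull_sub (x y : C1) : Bnull x -> Bnull y -> Bnull (x - y).
Proof. by move=> hx hy; apply: Bnull_add => //; exact: Bnull_opp. Qed.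
Lemma Bnull1 : Bnull (gen1 (1%g : G)).
Proof.
apply: (Bnull_eq _ (Bnull_opp (Bnull_pow 1%g 0))).
by rewrite scale0r sub0r opprK.
Qed.

Lemma ab_grel u v : gr u v -> Bnull (ab u - ab v).
Proof.
elim => {u v}.
- by move=> w; rewrite subrr; exact: Bnull0.
- by move=> u v _ h; rewrite -opprB; exact: Bnull_opp.
- move=> u v w _ h1 _ h2.
  by apply: (Bnull_eq _ (Bnull_add h1 h2)); rewrite addrA subrK.
- move=> u u' v v' _ h1 _ h2; apply: (Bnull_eq _ (Bnull_add h1 h2)).
  rewrite !ab_cat opprD addrACA. by [].
- move=> b a. apply: (Bnull_eq _ (@Bnull0 G)). rewrite !ab_cons ab_nil /= subr0 addr0. by case: b => /=; rewrite ?addrN ?addNr.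
- move=> a b; rewrite !ab_cons ab_nil /= !addr0.
  apply: (Bnull_eq _ (Bnull_conj b a)).
  by rewrite addrCA subrr addr0.
- move=> a n; rewrite ab_wpow ab_cons ab_nil addr0 /=.
  by rewrite -opprB; apply: Bnull_opp; exact: Bnull_pow.
- rewrite ab_cons ab_nil addr0 subr0 /=. exact: Bnull1.
Qed.


Local Notation C2 := (C2 G).
Lemma d2U (a b : G) : d2 (gen2 a b) = d2gen (a, b).
Proof. by rewrite /d2 /gen2 fglift_Freeg /prelift big_cons big_nil addr0 scale1r. Qed.
Lemma d2B (x y : C2) : d2 (x - y) = d2 x - d2 y. Proof. exact: lift_is_additive. Qed.
Lemma d20 : d2 (0 : C2) = 0. Proof. by rewrite -(subrr (0 : C2)) d2B subrr. Qed.
Lemma d2N (x : C2) : d2 (- x) = - d2 x. Proof. by rewrite -sub0r d2B d20 sub0r. Qed.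
Lemma d2D (x y : C2) : d2 (x + y) = d2 x + d2 y. Proof. by have := d2B x (- y); rewrite opprK => ->; rewrite d2N opprK. Qed.

Lemma zm1 (B BA X A : C1) : (B - BA + X) - (A - BA + B) = X - A.
Proof.
rewrite opprD opprB !addrA (addrAC (B - BA)) subrK (addrAC (B + X)) (addrAC B) subrr add0r.
by [].
Qed.
Lemma zm2 (n : int) (A Z Z1 : C1) : n *: A - Z + (A - Z1 + Z) = (n + 1) *: A - Z1.
Proof.
rewrite scalerDl scale1r !addrA (addrAC (n *: A - Z + A)) (addrAC (n *: A - Z)) subrK.
by []. Qed.
Lemma zm3 (n : int) (A Z W : C1) : n *: A - Z - (A - Z + W) = (n - 1) *: A - W.
Proof.
rewrite scalerDl scaleN1r opprD opprB !addrA subrK. by [].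
Qed.
Lemma zm4 (A A1 : C1) : - (A1 - A1 + A1) = 0 *: A - A1.
Proof. by rewrite subrr add0r scale0r sub0r. Qed.

Lemma winv_grel u v : gr u v -> gr (winv u) (winv v).
Proof.
move=> h.
have e1 : gr (winv u ++ (v ++ winv v)) (winv u) by rewrite wcancR cats0.
have e2 : gr (winv u ++ (v ++ winv v)) (winv v).
  transitivity (winv u ++ (u ++ winv v)).
    apply: grel_cat => //; apply: grel_cat => //; exact: grel_sym.
  by rewrite catA wcancL.
by rewrite -e1 e2.
Qed.

#[local] Instance winv_prop : Proper (gr ==> gr) winv.
Proof. exact: winv_grel. Qed.

Lemma unitc_f (w : word) : gr ((false, 1%g) :: w) w.
Proof. exact: (grel_cat (@grel_unit G) (grel_refl w)). Qed.
Lemma unitc_t (w : word) : gr ((true, 1%g) :: w) w.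
Proof.
have h := winv_grel (@grel_unit G); rewrite /winv /= in h.
exact: (grel_cat h (grel_refl w)).
Qed.
Lemma powc (a : G) n (w : word) : gr ((false, zpowg a n) :: w) (wpow a n ++ w).
Proof. exact: (grel_cat (grel_pow a n) (grel_refl w)). Qed.

Lemma nseq_rc k (x : bool * G) : nseq k x ++ [:: x] = x :: nseq k x.
Proof. by elim: k => //= k ->. Qed.

Lemma wpowS (a : G) n : gr (wpow a n ++ [:: (false, a)]) (wpow a (n + 1)).
Proof.
case: n => [k|[|k]].
- by rewrite -PoszD addn1 /= nseq_rc.
- by rewrite /= canc_tf.
- have -> : Negz k.+1 + 1 = Negz k by rewrite !NegzE; lia.
  rewrite /wpow -[nseq k.+2 _]/(_ :: nseq k.+1 _) -nseq_rc -catA /= canc_tf. by rewrite cats0.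
Qed.

Lemma zpowgS (a : G) n : zpowg a (n + 1) = (zpowg a n * a)%g.
Proof.
case: n => [k|[|k]].
- by rewrite -PoszD addn1 /= expgSr.
- by rewrite /= mulVg.
- have -> : Negz k.+1 + 1 = Negz k by rewrite !NegzE; lia.
  by rewrite /= [(a ^+ k.+2)%g]expgS invgM mulgVK.
Qed.

Lemma cw_pow (a : G) n : gr (cw (zpowg a n, a)) [::].
Proof.
rewrite /cw /= -zpowgS powc.
transitivity (wpow a n ++ [:: (false, a)] ++ winv [:: (false, zpowg a (n + 1))]).
  by [].
rewrite (winv_grel (grel_pow a (n+1))) catA wpowS. exact: wcancR.
Qed.

Lemma f1U2 (a b : G) : gr (f1 (gen2 a b)) (cw (a, b)).
Proof. exact: (f1U (a, b)). Qed.

Lemma pow_chain (a : G) (n : int) :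
  exists2 z : C2, d2 z = n *: gen1 a - gen1 (zpowg a n) & gr (f1 z) [::].
Proof.
have up m : (exists2 z : C2, d2 z = m *: gen1 a - gen1 (zpowg a m) & gr (f1 z) [::]) ->
            (exists2 z : C2, d2 z = (m + 1) *: gen1 a - gen1 (zpowg a (m + 1)) & gr (f1 z) [::]).
  case=> z hz fz; exists (z + gen2 (zpowg a m) a).
    by rewrite d2D d2U hz /d2gen /= -zpowgS zm2.
  by rewrite f1D fz f1U2 cw_pow.
have down m : (exists2 z : C2, d2 z = m *: gen1 a - gen1 (zpowg a m) & gr (f1 z) [::]) ->
            (exists2 z : C2, d2 z = (m - 1) *: gen1 a - gen1 (zpowg a (m - 1)) & gr (f1 z) [::]).
  case=> z hz fz; exists (z - gen2 (zpowg a (m - 1)) a).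
    rewrite d2B d2U hz /d2gen /= -zpowgS.
    have -> : m - 1 + 1 = m by lia.
    by rewrite zm3.
  by rewrite f1B fz f1U2 cw_pow; apply: winv_nil.
elim/int_ind: n => [|n IH|n IH].
- exists (- gen2 1%g 1%g).
    by rewrite d2N d2U /d2gen /= mulg1 (zm4 (gen1 a)).
  rewrite f1N; apply: winv_nil; rewrite f1U2 /cw /= mulg1 unitc_f unitc_f unitc_t. by [].
- have e : Posz n.+1 = Posz n + 1 by lia. rewrite e. exact: up.
- have e : - Posz n.+1 = - Posz n - 1 by lia. rewrite e. exact: down.
Qed.

Lemma BnullChain y : Bnull y -> exists2 z : C2, d2 z = y & gr (f1 z) [::].
Proof.
elim => {y}.
- by exists 0; [exact: d20 | exact: f10].
- move=> a b; exists (gen2 (b * a * b^-1)%g b - gen2 b a).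
    rewrite d2B !d2U /d2gen /=.
    have -> : (b * a * b^-1 * b = b * a)%g by rewrite mulgVK.
    exact: zm1.
  rewrite f1B !f1U2 /cw /winv /=.
  have -> : (b * a * b^-1 * b = b * a)%g by rewrite mulgVK.
  by rewrite canc_tf conjc canc_tf !canc_ft.
- exact: pow_chain.
- move=> x y _ [z1 h1 f1z] _ [z2 h2 f2z]; exists (z1 + z2).
    by rewrite d2D h1 h2.
  exact: f1_triv_D.
- move=> x _ [z h fz]; exists (- z); [by rewrite d2N h | exact: f1_triv_N].
Qed.
Lemma zm5 (X P O Y : C1) : (X - (P + O)) + O - (X - Y) = Y - P.
Proof. rewrite opprD (addrA X) subrK opprB addrCA (addrAC X) subrr add0r. by []. Qed.
Lemma zm6 (X P O : C1) : X - (X - (P + O)) - O = P.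
Proof. by rewrite opprB (addrC X) subrK addrK. Qed.

Lemma central_winv_cw p (u : word) : gr (winv (cw p) ++ u) (u ++ winv (cw p)).
Proof. apply: central; by rewrite weps_winv weps_cw invg1. Qed.
Lemma central_cw p (u : word) : gr (cw p ++ u) (u ++ cw p).
Proof. apply: central; exact: weps_cw. Qed.

Lemma cocycle (g h k : G) :
  gr (cw (g, h) ++ cw ((g * h)%g, k)) (cw (h, k) ++ cw (g, (h * k)%g)).
Proof.
transitivity ([:: (false, g)] ++ cw (h, k) ++ [:: (true, g)] ++ cw (g, (h * k)%g)).
  rewrite /cw /= canc_tf canc_tf canc_tf mulgA. by [].
rewrite catA -(central_cw (h, k) [:: (false, g)]) -catA /=.
by rewrite canc_ft.
Qed.

Lemma f1_d3gen t : gr (f1 (gen2 t.1.2 t.2 - gen2 (t.1.1 * t.1.2)%g t.2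
    + gen2 t.1.1 (t.1.2 * t.2)%g - gen2 t.1.1 t.1.2)) [::].
Proof.
case: t => [[g h] k] /=.
rewrite f1B f1D f1B !f1U2.
rewrite -(catA (cw (h, k))) central_winv_cw !catA -catA -winv_cat.
rewrite -cocycle. exact: wcancR.
Qed.

Lemma f1_d3 z : gr (f1 (d3 z)) [::].
Proof.
rewrite /d3 -[z]Freeg_enum fglift_Freeg /prelift.
elim: (fgenum z) => [|x s IH]; first by rewrite big_nil f10.
rewrite big_cons; apply: f1_triv_D => //; apply: f1_triv_Z; exact: f1_d3gen.
Qed.

Lemma central_f1 phi (u : word) : gr (f1 phi ++ u) (u ++ f1 phi).
Proof. apply: central; exact: weps_f1. Qed.

Lemma decomp (w : word) : exists phi : C2, gr w (f1 phi ++ [:: (false, weps w)]).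
Proof.
elim: w => [|[b a] w [phi IH]].
  exists 0; rewrite f10 /= unitc_f. by [].
case: b => /=; set e := weps w in IH *; clearbody e.
- exists (phi - gen2 a (a^-1 * e)%g).
  rewrite f1B f1U2 IH -catA.
  set b := (a^-1 * e)%g.
  have he : e = (a * b)%g by rewrite /b mulVKg.
  rewrite he.
  have h1 : gr [:: (false, (a*b)%g)] (winv (cw (a,b)) ++ [:: (false,a); (false,b)]).
    by rewrite /winv /= !canc_tf.
  transitivity ((true, a) :: (f1 phi ++ [:: (false, (a*b)%g)])); first by [].
  rewrite -cat1s catA -central_f1 -catA h1.
  rewrite (catA [:: (true,a)]) -central_winv_cw -catA /= canc_tf. by [].
- exists (phi + gen2 a e).
  rewrite f1D f1U2 IH -catA.
  rewrite -cat1s catA -central_f1 -catA /=.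
  by rewrite canc_tf.
Qed.


Lemma main_aux :
  exists (f1 : sg_car (H2 G) -> sg_car (AG G))
         (f2 : sg_car (AG G) -> sg_car (BG G))
         (f3 : sg_car (BG G) -> sg_car (H1 G)),
    [/\ sg_hom f1, sg_hom f2 & sg_hom f3] /\
    [/\ sg_exact f1 f2, sg_exact f2 f3 & sg_onto f3].
Proof.
exists f1, ab, (fun x : C1 => x).
split; split.
- split => /=.
  + by move=> x _; exact: weps_f1.
  + move=> x y _ _ [z hz].
    have -> : x = d3 z + y by rewrite hz subrK.
    by rewrite f1D f1_d3.
  + by move=> x y _ _; exact: f1D.
- split => /=.
  + by [].
  + by move=> x y _ _; exact: ab_grel.
  + by move=> x y _ _; rewrite ab_cat subrr; exact: Bnull0.
- split => /=.
  + by [].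
  + by move=> x y _ _ /BnullChain [z hz _]; exists z.
  + by move=> x y _ _; exists 0; rewrite d20 subrr.
- move=> y /= hy; split.
  + rewrite subr0 => hB.
    have [phi hphi] := decomp y.
    rewrite hy in hphi.
    have h2 := ab_grel hphi.
    rewrite ab_cat ab_f1 ab_cons ab_nil addr0 /= in h2.
    have hd : Bnull (d2 phi).
      apply: (Bnull_eq (zm6 (ab y) (d2 phi) (gen1 1%g))).
      apply: Bnull_sub; last exact: Bnull1.
      exact: Bnull_sub.
    have [psi hpsi fpsi] := BnullChain hd.
    exists (phi - psi); first by rewrite d2B hpsi subrr.
    rewrite f1B fpsi /= cats0 hphi grel_unit cats0. by [].
  + case=> x hx hg.
    have := ab_grel hg; rewrite ab_f1 hx subr0 => h.
    apply: (Bnull_eq _ (Bnull_opp h)). by rewrite sub0r opprK.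
- move=> y _ /=; split.
  + case=> z hz; exists (f1 z); first exact: weps_f1.
    by rewrite ab_f1 hz subr0 subrr; exact: Bnull0.
  + case=> x hx hB.
    have [phi hphi] := decomp x.
    rewrite hx in hphi.
    have h2 := ab_grel hphi.
    rewrite ab_cat ab_f1 ab_cons ab_nil addr0 /= in h2.
    have hd : Bnull (y - d2 phi).
      apply: (Bnull_eq (zm5 (ab x) (d2 phi) (gen1 1%g) y)).
      apply: Bnull_sub => //; apply: Bnull_add => //; exact: Bnull1.
    have [psi hpsi _] := BnullChain hd.
    exists (phi + psi). by rewrite d2D hpsi addrC subrK subr0.
- move=> y _; exists y => //; exists 0; by rewrite d20 subrr.
Qed.
End S.

Theorem mainTheorem10 (G : groupType) :
  exists (f1 : sg_car (H2 G) -> sg_car (AG G))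
         (f2 : sg_car (AG G) -> sg_car (BG G))
         (f3 : sg_car (BG G) -> sg_car (H1 G)),
    [/\ sg_hom f1, sg_hom f2 & sg_hom f3] /\
    [/\ sg_exact f1 f2, sg_exact f2 f3 & sg_onto f3].
Proof. exact: main_aux. Qed.
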